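(* Let $G$ be a flat affine group scheme over $R$ and $N\to G$ the automatic blowup of the identity. For every morphism $\mathcal G\to G$ of flat affine group schemes over $R$ which induces an isomorphism on generic fibres, there exists a unique morphism $N\to\mathcal G$ whose composition with $\mathcal G\to G$ is $N\to G$. Thus $N\to G$ is an initial object in the category of flat affine group schemes over $G$ inducing isomorphisms on generic fibres.
   Context: $R$ is a discrete valuation ring with uniformizer $\pi$, fraction field $K$, residue field $k$; $R[G]\subset K[G]$ for flat $G$. The Neron blowup of a flat affine group scheme $H$ at a closed subgroup of $H\otimes k$ with ideal $J\subset R[H]$ (inverse image of its ideal) is $\mathrm{Spec}$ of the subring of $K[H]$ generated by $R[H]$ and $\pi^{-1}J$. The automatic blowup of the identity $N\to G$ is the limit of $\cdots\to G_{n+1}\to G_n\to\cdots\to G_0=G$, where $G_{n+1}\to G_n$ is the Neron blowup of $G_n$ at $\{e\}\subset G_n\otimes k$. *)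

(* Defs.v *)
(* Encoding of flat affine group schemes over a DVR R
   through their generic fibres: a flat affine group scheme G over R is
   encoded by the commutative K-Hopf algebra A = K[G] together with the
   R-subalgebra B = R[G] of A (flat over a DVR = torsion free, so
   R[G] embeds in K[G] = R[G] (x)_R K). *)
From HB Require Import structures.
From mathcomp Require Import all_boot all_order all_algebra.
Set Implicit Arguments. Unset Strict Implicit. Unset Printing Implicit Defensive.
Import Order.TTheory GRing.Theory Num.Theory.
Local Open Scope ring_scope.

Definition is_dvr (K : fieldType) (R : K -> Prop) (pi : K) : Prop :=
  [/\ [/\ R 0, R 1, (forall x y, R x -> R y -> R (x - y))
         & (forall x y, R x -> R y -> R (x * y))],
      [/\ R pi, pi != 0 & (~ R pi^-1)]
    & forall x : K, x != 0 ->
        exists (n : int) (u : K), [/\ R u, R u^-1 & x = u * pi ^ n]].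

(* An element of A (x)_K A is represented by a formal sum (a list of pairs);
   over a field, two such sums are equal in A (x)_K A iff every K-bilinear
   form A x A -> K takes the same value on them.  Same for A (x) A (x) A. *)
Section Tensor.
Variables (K : fieldType) (A : comAlgType K).

Definition bilin (f : A -> A -> K) : Prop :=
  (forall (a : K) x x' y, f (a *: x + x') y = a * f x y + f x' y) /\
  (forall (a : K) x y y', f x (a *: y + y') = a * f x y + f x y').

Definition teq2 (s t : seq (A * A)) : Prop :=
  forall f, bilin f ->
    \sum_(p <- s) f p.1 p.2 = \sum_(p <- t) f p.1 p.2.

Definition trilin (f : A -> A -> A -> K) : Prop :=
  (forall (a : K) x x' y z, f (a *: x + x') y z = a * f x y z + f x' y z) /\
  (forall (a : K) x y y' z, f x (a *: y + y') z = a * f x y z + f x y' z) /\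
  (forall (a : K) x y z z', f x y (a *: z + z') = a * f x y z + f x y z').

Definition teq3 (s t : seq (A * A * A)) : Prop :=
  forall f, trilin f ->
    \sum_(p <- s) f p.1.1 p.1.2 p.2 = \sum_(p <- t) f p.1.1 p.1.2 p.2.

Definition tmul (s t : seq (A * A)) : seq (A * A) :=
  [seq (p.1 * q.1, p.2 * q.2) | p <- s, q <- t].

Definition is_hopf (D : A -> seq (A * A)) (e : A -> K) (S : A -> A) : Prop :=
  [/\
      [/\ (forall (a : K) x y,
         teq2 (D (a *: x + y)) ([seq (a *: p.1, p.2) | p <- D x] ++ D y)),
      (forall x y, teq2 (D (x * y)) (tmul (D x) (D y)))
      & teq2 (D 1) [:: (1, 1)]],
      (forall x, teq3 [seq (q.1, q.2, p.2) | p <- D x, q <- D p.1]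
                      [seq (p.1, q.1, q.2) | p <- D x, q <- D p.2]),
      [/\ (forall (a : K) x y, e (a *: x + y) = a * e x + e y),
          (forall x y, e (x * y) = e x * e y) & e 1 = 1],
      (forall x, \sum_(p <- D x) e p.1 *: p.2 = x /\
                 \sum_(p <- D x) e p.2 *: p.1 = x)
    &
      (forall (a : K) x y, S (a *: x + y) = a *: S x + S y) /\
      (forall x, \sum_(p <- D x) S p.1 * p.2 = (e x)%:A /\
                 \sum_(p <- D x) p.1 * S p.2 = (e x)%:A)].

End Tensor.

Section Flat.
Variables (K : fieldType) (R : K -> Prop) (pi : K) (A : comAlgType K).

Definition is_Rsubalg (B : A -> Prop) : Prop :=
  [/\ (forall a : K, R a -> B a%:A),
      (forall x y, B x -> B y -> B (x - y))
    & (forall x y, B x -> B y -> B (x * y))].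

(* (A, B) encodes the flat affine group scheme Spec B over R with
   generic fibre Spec A: B is an R-Hopf subalgebra of the K-Hopf algebra A
   and B (x)_R K = A (every element of A is pi^-n times an element of B). *)
Definition flat_group (D : A -> seq (A * A)) (e : A -> K) (S : A -> A)
    (B : A -> Prop) : Prop :=
  [/\ is_hopf D e S, is_Rsubalg B,
      (forall x : A, exists (n : nat) (b : A), B b /\ pi ^+ n *: x = b)
    & [/\
      (forall b, B b -> exists s : seq (A * A),
          (forall p, p \in s -> B p.1 /\ B p.2) /\ teq2 (D b) s),
      (forall b, B b -> R (e b))
    & (forall b, B b -> B (S b))]].

Inductive gen_alg (P : A -> Prop) : A -> Prop :=
  | gen_in x : P x -> gen_alg P x
  | gen_scal (a : K) : R a -> gen_alg P a%:A
  | gen_sub x y : gen_alg P x -> gen_alg P y -> gen_alg P (x - y)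
  | gen_mul x y : gen_alg P x -> gen_alg P y -> gen_alg P (x * y).

(* For H with R[H] = Bn inside K[H] = A and counit e: the ideal J of
   {e} in H (x) k, pulled back to R[H], is {y in Bn | e y in pi R};
   the Neron blowup is Spec of the subring generated by Bn and pi^-1 J. *)
Definition neron_blowup_e (e : A -> K) (Bn : A -> Prop) : A -> Prop :=
  gen_alg (fun x => Bn x \/
             exists y, [/\ Bn y, R (pi^-1 * e y) & x = pi^-1 *: y]).

Fixpoint auto_blowup_step (e : A -> K) (B : A -> Prop) (n : nat) : A -> Prop :=
  match n with
  | 0 => B
  | n'.+1 => neron_blowup_e e (auto_blowup_step e B n')
  end.

(* R[N] = colimit of the R[G_n] = their union inside A  (N = lim G_n) *)
Definition auto_blowup (e : A -> K) (B : A -> Prop) : A -> Prop :=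
  fun x => exists n, auto_blowup_step e B n x.

End Flat.

(* A morphism of flat group schemes Spec B1 -> Spec B2 (generic fibres
   A1, A2) is encoded by its comorphism on generic fibres f : A2 -> A1,
   a K-bialgebra homomorphism mapping B2 into B1 (it is determined by,
   and determines, the R-Hopf algebra map B2 -> B1). *)
Definition group_comor (K : fieldType) (A2 A1 : comAlgType K)
    (B2 : A2 -> Prop) (B1 : A1 -> Prop)
    (D2 : A2 -> seq (A2 * A2)) (e2 : A2 -> K)
    (D1 : A1 -> seq (A1 * A1)) (e1 : A1 -> K) (f : A2 -> A1) : Prop :=
  [/\ [/\ (forall (a : K) x y, f (a *: x + y) = a *: f x + f y),
      (forall x y, f (x * y) = f x * f y) & f 1 = 1],
      (forall x, B2 x -> B1 (f x)),
      (forall x, teq2 [seq (f p.1, f p.2) | p <- D2 x] (D1 (f x)))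
    & (forall x, e1 (f x) = e2 x)].

(* Main.v *)
Require Import Defs.
From HB Require Import structures.
From mathcomp Require Import all_boot all_order all_algebra.
Import Order.TTheory GRing.Theory Num.Theory.
Local Open Scope ring_scope.

Lemma lin_props (K : fieldType) (U V : lmodType K) (h : U -> V) :
  (forall (a : K) x y, h (a *: x + y) = a *: h x + h y) ->
  h 0 = 0 /\ forall (a : K) x, h (a *: x) = a *: h x.
Proof.
move=> lin.
have h0 : h 0 = 0.
  have := lin 1 0 0; rewrite !scale1r addr0 => H.
  by apply: (@addrI _ (h 0)); rewrite addr0 -H.
split=> // a x; by have := lin a x 0; rewrite !addr0 h0 addr0.
Qed.

Lemma e_props (K : fieldType) (A : comAlgType K) (e : A -> K) :
  (forall (a : K) x y, e (a *: x + y) = a * e x + e y) -> e 1 = 1 ->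
  e 0 = 0 /\ (forall (a : K) x, e (a *: x) = a * e x) /\
  (forall x y, e (x - y) = e x - e y) /\ (forall a : K, e a%:A = a).
Proof.
move=> lin e1.
have h0 : e 0 = 0.
  have := lin 1 0 0; rewrite !scale1r addr0 => H.
  rewrite mul1r in H; by apply: (@addrI _ (e 0)); rewrite addr0 -H.
have hs : forall (a : K) x, e (a *: x) = a * e x.
  by move=> a x; have := lin a x 0; rewrite !addr0 h0 addr0.
split=> //; split=> //; split.
  move=> x y; have := lin (-1) y x; rewrite scaleN1r addrC => ->.
  by rewrite mulN1r addrC.
by move=> a; rewrite hs e1 mulr1.
Qed.

Section Blow.
Variables (K : fieldType) (R : K -> Prop) (pi : K) (A : comAlgType K).
Variable e : A -> K.
Hypothesis R0 : R 0.
Hypothesis pi0 : pi != 0.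
Hypothesis ee : forall (a : K) x, e (a *: x) = a * e x.

Lemma step_mono (B : A -> Prop) k x :
  auto_blowup_step R pi e B k x -> forall m, auto_blowup_step R pi e B (k + m) x.
Proof.
move=> H m; elim: m => [|m IH]; first by rewrite addn0.
by rewrite addnS /=; apply: gen_in; left.
Qed.

Lemma step_div (B : A -> Prop) n : forall k x, e x = 0 ->
  auto_blowup_step R pi e B k (pi ^+ n *: x) ->
  auto_blowup_step R pi e B (k + n) x.
Proof.
elim: n => [|n IH] k x ex H.
  by rewrite addn0; move: H; rewrite scale1r.
have H1 : auto_blowup_step R pi e B (k + n) (pi *: x).
  apply: IH; first by rewrite ee ex mulr0.
  by rewrite scalerA -exprSr.
rewrite addnS /=; apply: gen_in; right; exists (pi *: x); split=> //.
  by rewrite ee ex !mulr0.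
by rewrite scalerA mulVf // scale1r.
Qed.
End Blow.

Theorem corollary2p22 (K : fieldType) (R : K -> Prop) (pi : K)
    (hR : is_dvr R pi)
    (A : comAlgType K) (D : A -> seq (A * A)) (e : A -> K) (S : A -> A)
    (B : A -> Prop) (hG : flat_group R pi D e S B)
    (A' : comAlgType K) (D' : A' -> seq (A' * A')) (e' : A' -> K)
    (S' : A' -> A') (B' : A' -> Prop) (hG' : flat_group R pi D' e' S' B')
    (f : A -> A') (hf : group_comor B B' D e D' e' f) (hiso : bijective f) :
  exists g : A' -> A,
    (group_comor B' (auto_blowup R pi e B) D' e' D e g /\
     (forall x, B x -> g (f x) = x)) /\
    (forall g' : A' -> A,
       group_comor B' (auto_blowup R pi e B) D' e' D e g' /\
       (forall x, B x -> g' (f x) = x) ->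
       forall y, g' y = g y).
Proof.
case: hR => [[R0 R1 RB RM] [Rpi pi0 _] _].
case: hG => [[_ _ [elin emul e1] _ _] [BC BB BM] Bdiv _].
case: hG' => [_ _ _ [_ e'R _]].
case: hf => [[flin fmul f1] fB fD fe].
case: hiso => g fK gK.
have [_ [ees [eB eC]]] := @e_props _ _ e elin e1.
have [f0 fs] := @lin_props _ _ _ f flin.
have glin : forall (a : K) x y, g (a *: x + y) = a *: g x + g y.
  by move=> a x y; apply: (can_inj fK); rewrite flin !gK.
exists g; split; last first.
  move=> g' [[[g'lin _ _] _ _ _] g'f] y.
  have [_ g's] := @lin_props _ _ _ g' g'lin.
  have [n [b [Bb hb]]] := Bdiv (g y).
  have := g'f b Bb; rewrite -hb fs g's gK => H.
  by apply: (scalerI (expf_neq0 n pi0)).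
split=> //; split.
- split=> //.
  + by move=> x y; apply: (can_inj fK); rewrite fmul !gK.
  + by apply: (can_inj fK); rewrite f1 gK.
- move=> b Bb.
  have eg : e (g b) = e' b by rewrite -fe gK.
  set x := g b - (e' b)%:A.
  have ex : e x = 0 by rewrite eB eC eg subrr.
  have [n [y [By hy]]] := Bdiv x.
  have Hx : auto_blowup_step R pi e B (0 + n) x.
    by apply: step_div => //; rewrite /= hy.
  have Rc : R (0 - e' b) by apply: RB => //; apply: e'R.
  have Hc : auto_blowup_step R pi e B (0 + n) (0 - e' b)%:A.
    by apply: step_mono; apply: BC.
  exists (0 + n)%N.
  have -> : g b = x - (0 - e' b)%:A.
    by rewrite /x sub0r scaleNr opprK subrK.
  case: (0 + n)%N Hx Hc => [|k] /=; first exact: BB.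
  exact: gen_sub.
- move=> x F [F1 F2].
  have hF : bilin (fun u v => F (g u) (g v)).
    by split=> a u u' v /=; rewrite glin ?F1 ?F2.
  have := fD (g x) _ hF; rewrite gK big_map /= => H.
  rewrite big_map /= -H; by apply: eq_bigr => p _; rewrite !fK.
- by move=> x; rewrite -fe gK.
Qed.
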